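(* There are constants $\delta,c>0$ depending only on the predicate $\psi$ such that if $\mathcal{C}=\{C_1,\dots,C_m\}$ is a random Additive-CSP($\psi$) instance with $n$ variables and $m=cn$ constraints, then with probability $1-o(1)$, $\mathrm{GI}(G_{\mathcal{C}},G_{\mathcal{C}^0})<1-\delta$.
   Context: $H$ is a finite abelian group, $k\ge3$, $\psi\subseteq H^k$ a balanced pairwise independent subgroup (proper subgroup of $H^k$; for $a$ uniform in $\psi$ each coordinate uniform on $H$, any two coordinates independent). An instance has constraints $\psi(x_{j_1}+a_1,\dots,x_{j_k}+a_k)=1$ on distinct variables, $a_i\in H$; $\mathcal{C}^0$ sets all $a_i=0$. A random instance with $m$ constraints picks each constraint independently: an ordered $k$-tuple of distinct variables uniformly among the $\binom{n}{k}k!$ possibilities and each $a_i$ uniform in $H$. Variable gadget $\Gamma_x$: fix $H=\mathbb{Z}_{p_1}\oplus\dots\oplus\mathbb{Z}_{p_t}$ with $p_i\ge2$; vertices $x\mapsto b$, $b\in H$. An $i$-row is a set of $p_i$ elements of $H$ agreeing in all coordinates except the $i$-th. Row part (only if $t>1$): for every $i$ and $i$-row $R$, add a new vertex $w_R$ adjacent to all $x\mapsto b$, $b\in R$, and $i$ new vertices each adjacent only to $w_R$. Cycle part: for every $i$ and $i$-row $R$: if $p_i=2$ add an edge between its two vertices; if $p_i\ge3$, write $R=\{r_0,\dots,r_{p_i-1}\}$ with $r_j$ having $i$-th coordinate $j$, and for each $j\in\mathbb{Z}_{p_i}$ add the edge $\{x\mapsto r_j,x\mapsto r_{j+1}\}$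 and two new vertices $u,v$ with edges $\{u,x\mapsto r_j\},\{u,x\mapsto r_{j+1}\},\{u,v\},\{v,x\mapsto r_{j+1}\}$. Graph $G_{\mathcal{C}}$: one copy of $\Gamma_{x_j}$ per variable; for each constraint $C_i$ on $(x_{j_1},\dots,x_{j_k})$, constraint vertices, one per assignment $\alpha$ satisfying $C_i$ (not shared between constraints), forming a clique, with each $\alpha$ adjacent to $x_{j_l}\mapsto\alpha(x_{j_l})$. $\mathrm{GI}(G,G')=\max_\pi\frac{|\{e\in E(G):\pi(e)\in E(G')\}|}{\max\{|E(G)|,|E(G')|\}}$ over bijections $\pi$. *)

(* Defs.v *)
From HB Require Import structures.
From mathcomp Require Import all_boot all_order all_algebra all_fingroup.
From mathcomp Require Import reals.
Set Implicit Arguments. Unset Strict Implicit. Unset Printing Implicit Defensive.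
Import Order.TTheory GRing.Theory Num.Theory.

Definition Hgrp (t : nat) (p : 'I_t -> nat) : finType :=
  {dffun forall i : 'I_t, 'Z_(p i)}.

Section Group.
Variables (t : nat) (p : 'I_t -> nat).
Local Notation H := (Hgrp p).

Definition Hzero : H := @finfun _ (fun i => 'Z_(p i)) (fun i => 0%R).
Definition Hadd (f g : H) : H :=
  @finfun _ (fun i => 'Z_(p i)) (fun i => (f i + g i)%R).
Definition Hopp (f : H) : H := @finfun _ (fun i => 'Z_(p i)) (fun i => (- f i)%R).
Definition Hsub (f g : H) : H := Hadd f (Hopp g).

Definition Hincr (i : 'I_t) (r : H) : H :=
  @finfun _ (fun j => 'Z_(p j)) (fun j => if j == i then (r j + 1)%R else r j).

Definition same_row (i : 'I_t) (r r' : H) : bool :=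
  [forall j, (j != i) ==> (r j == r' j)].

Variable k : nat.
Definition Ktup := {ffun 'I_k -> H}.
Definition Kzero : Ktup := [ffun _ => Hzero].
Definition Kadd (s s' : Ktup) : Ktup := [ffun l => Hadd (s l) (s' l)].
Definition Kopp (s : Ktup) : Ktup := [ffun l => Hopp (s l)].

Definition is_subgroup (psi : {set Ktup}) : Prop :=
  [/\ Kzero \in psi,
      (forall s s', s \in psi -> s' \in psi -> Kadd s s' \in psi) &
      (forall s, s \in psi -> Kopp s \in psi)].

(* for a uniform in psi, each coordinate is uniform on H *)
Definition balanced (psi : {set Ktup}) : Prop :=
  forall (l : 'I_k) (b : H),
    (#|[set s in psi | s l == b]| * #|[set: H]|)%N = #|psi|.

(* for a uniform in psi, any two coordinates are independent
   (together with balancedness: the pair is uniform on H x H) *)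
Definition pairwise_independent (psi : {set Ktup}) : Prop :=
  forall (l l' : 'I_k) (b b' : H), l != l' ->
    (#|[set s in psi | (s l == b) && (s l' == b')]| * #|[set: H]| ^ 2)%N
      = #|psi|.

Variables (n m : nat).
(* a constraint: an ordered k-tuple of variables and the shifts a_1..a_k *)
Definition constr := ({ffun 'I_k -> 'I_n} * {ffun 'I_k -> H})%type.
Definition instance := {ffun 'I_m -> constr}.

Definition valid_instance (I : instance) : bool :=
  [forall c, injectiveb (I c).1].

Definition zero_instance (I : instance) : instance :=
  [ffun c => ((I c).1, Kzero)].

(* X (x,b)        : vertex  x |-> b of the gadget of variable x
   W (x,i,b)      : vertex  w_R of the i-row R containing b (b i = 0)
   P (x,i,b,j)    : pendant vertices of w_R, j <= i (so i.+1 of them, the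
                    0-indexed coordinate i being the paper's (i+1)-th)
   U (x,i,r,f)    : cycle-part vertices u (f = false) / v (f = true) for the
                    pair (r_j, r_{j+1}) = (r, Hincr i r), when p_i >= 3
   C (c,s)        : constraint vertex of constraint c for the satisfying
                    assignment alpha with alpha(x_{j_l}) = s_l - a_l, s in psi *)
Definition Vraw : finType :=
  (('I_n * H) + ('I_n * 'I_t * H) + ('I_n * 'I_t * H * 'I_t)
   + ('I_n * 'I_t * H * bool) + ('I_m * Ktup))%type.

Variable psi : {set Ktup}.

Definition valid_vertex (v : Vraw) : bool :=
  match v with
  | inl (inl (inl (inl _))) => true
  | inl (inl (inl (inr (x, i, b)))) => (1 < t)%N && (b i == 0%R)
  | inl (inl (inr (x, i, b, j)))   => [&& (1 < t)%N, b i == 0%R & (j <= i)%N]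
  | inl (inr (x, i, r, f))         => (3 <= p i)%N
  | inr (c, s)                     => s \in psi
  end.

Definition Vert : finType := {v : Vraw | valid_vertex v}.

Definition arc (I : instance) (u v : Vraw) : bool :=
  match u, v with
  | inl (inl (inl (inr (x, i, b)))), inl (inl (inl (inl (y, r)))) =>
      (x == y) && same_row i r b
  | inl (inl (inr (x, i, b, j))), inl (inl (inl (inr (y, i', b')))) =>
      [&& x == y, i == i' & b == b']
  | inl (inl (inl (inl (x, r)))), inl (inl (inl (inl (y, r')))) =>
      (x == y) && [exists i, r' == Hincr i r]
  | inl (inr (x, i, r, false)), inl (inl (inl (inl (y, r')))) =>
      (x == y) && ((r' == r) || (r' == Hincr i r))
  | inl (inr (x, i, r, false)), inl (inr (y, i', r', true)) =>
      [&& x == y, i == i' & r == r']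
  | inl (inr (x, i, r, true)), inl (inl (inl (inl (y, r')))) =>
      (x == y) && (r' == Hincr i r)
  | inr (c, s), inr (c', s') => (c == c') && (s != s')
  | inr (c, s), inl (inl (inl (inl (y, r)))) =>
      [exists l, (y == (I c).1 l) && (r == Hsub (s l) ((I c).2 l))]
  | _, _ => false
  end.

Definition adjG (I : instance) : rel Vert :=
  fun u v => arc I (val u) (val v) || arc I (val v) (val u).

End Group.

Definition edges (V : finType) (e : rel V) : {set {set V}} :=
  [set [set x.1; x.2] | x in [set x : V * V | e x.1 x.2]].

Definition preserved (V : finType) (e e' : rel V) (pi : {perm V}) : nat :=
  #|[set E in edges e | [set pi x | x in E] \in edges e']|.

Definition GI (R : numFieldType) (V : finType) (e e' : rel V) : R :=
  ((\max_(pi : {perm V}) preserved e e' pi)%:R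
     / (maxn #|edges e| #|edges e'|)%:R)%R.

Definition GI_instance (R : numFieldType) (t : nat) (p : 'I_t -> nat) (k : nat)
    (psi : {set Ktup p k}) (n m : nat) (I : instance p k n m) : R :=
  GI R (@adjG t p k n m psi I) (@adjG t p k n m psi (zero_instance I)).

(* Probability of an event for the uniformly random instance
   (each constraint independently: uniform ordered k-tuple of distinct
   variables and uniform shifts), i.e. uniform over valid instances. *)
Definition Pr_instance (R : numFieldType) (t : nat) (p : 'I_t -> nat) (k n m : nat)
    (E : instance p k n m -> bool) : R :=
  ((#|[set I : instance p k n m | valid_instance I && E I]|)%:R
     / (#|[set I : instance p k n m | valid_instance I]|)%:R)%R.

(* Main.v *)
Require Import Defs.
From HB Require Import structures.
From mathcomp Require Import all_boot all_order all_algebra all_fingroup.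
From mathcomp Require Import reals.
Import Order.TTheory GRing.Theory Num.Theory.
Set Implicit Arguments. Unset Strict Implicit. Unset Printing Implicit Defensive.
From mathcomp Require Import zify.
From mathcomp Require Import ring lra.
Section Struct.
Variables (t : nat) (p : 'I_t -> nat) (k n m : nat) (psi : {set Ktup p k}).
Local Notation H := (Hgrp p).
Local Notation V := (Vert n m psi).
Local Notation VR := (Vraw p k n m).

Lemma HsubK (b a : H) : Hsub (Hadd b a) a = b.
Proof. by apply/ffunP=> i; rewrite !ffunE addrK. Qed.
Lemma HaddK (s a : H) : Hadd (Hsub s a) a = s.
Proof. by apply/ffunP=> i; rewrite !ffunE subrK. Qed.
Lemma Hsub0 (r : H) : Hsub r (Hzero p) = r.
Proof. by apply/ffunP=> i; rewrite !ffunE oppr0 addr0. Qed.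

Definition Xr (x : 'I_n) (b : H) : VR := inl (inl (inl (inl (x, b)))).
Definition Cr (c : 'I_m) (s : Ktup p k) : VR := inr (c, s).
Definition Xv (x : 'I_n) (b : H) : V := @exist VR _ (Xr x b) isT.

Definition isC (v : VR) : bool := if v is inr _ then true else false.
Definition cidx (v : VR) : option 'I_m := if v is inr (c, _) then Some c else None.
Definition sndC (v : VR) : Ktup p k := if v is inr (_, s) then s else Kzero p k.
Definition varX (v : VR) : option 'I_n :=
  if v is inl (inl (inl (inl (x, _)))) then Some x else None.

Lemma adjC_inv (I : instance p k n m) (u v : V) c s : val u = Cr c s -> adjG I u v ->
 (exists s', val v = Cr c s') \/
 (exists l, val v = Xr ((I c).1 l) (Hsub (s l) ((I c).2 l))).
Proof.
rewrite /adjG => ->.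
case: v => [[[[[[y r]|[[y i] b]]|[[[y i] b] j]]|[[[y i] r] [|]]]|[c' s']] Hv] //=;
  rewrite ?orbF //=.
- case/existsP => l /andP[/eqP-> /eqP->]; right; by exists l.
- case/orP=> /andP[/eqP Hc _]; left; exists s'; by rewrite ?Hc.
Qed.

Lemma adjCC (I : instance p k n m) (u v : V) c s s' :
  val u = Cr c s -> val v = Cr c s' -> s != s' -> adjG I u v.
Proof. by rewrite /adjG => -> -> /= ->; rewrite eqxx. Qed.

Lemma adjCX (I : instance p k n m) (u v : V) c s l :
  val u = Cr c s -> val v = Xr ((I c).1 l) (Hsub (s l) ((I c).2 l)) -> adjG I u v.
Proof.
rewrite /adjG => -> -> /=; apply/orP; left; apply/existsP; exists l; by rewrite !eqxx.
Qed.


Definition mkC c s (Hs : s \in psi) : V := @exist VR _ (Cr c s) Hs.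

Lemma adj_sym (I : instance p k n m) (u v : V) : adjG I u v = adjG I v u.
Proof. by rewrite /adjG orbC. Qed.

Definition pickp (pi : {perm V}) (x : 'I_n) (b : H) : bool :=
  match val (pi (Xv x b)), val (pi (Xv x (Hzero p))) with
  | inl (inl (inl (inl (y, r)))), inl (inl (inl (inl (y', _)))) =>
      (y == y') && (r == Hzero p)
  | _, _ => false end.
Definition hx (pi : {perm V}) (x : 'I_n) : H := odflt (Hzero p) [pick b | pickp pi x b].

Lemma pickpP pi x b : pickp pi x b = true <->
  exists y, val (pi (Xv x b)) = Xr y (Hzero p) /\ varX (val (pi (Xv x (Hzero p)))) = Some y.
Proof.
rewrite /pickp; case: (val (pi (Xv x b))) => [[[[[y r]|?]|?]|?]|?];
  case: (val (pi (Xv x (Hzero p)))) => [[[[[y' r']|?]|?]|?]|?];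
  split => //; try by case=> ? [].
- by case/andP=> /eqP-> /eqP->; exists y'.
- by case=> z [[-> ->]] [->]; rewrite !eqxx.
Qed.

Definition inQ c (u : V) := cidx (val u) == Some c.

Definition nice (I : instance p k n m) (pi : {perm V}) c : bool :=
  [forall u : V, [forall v : V, inQ c u ==> adjG I u v ==>
       adjG (zero_instance I) (pi u) (pi v)]]
  && [forall u : V, inQ c u ==> isC (val (pi u))].

Definition satv (h : 'I_n -> H) (I : instance p k n m) c : bool :=
  [ffun l => Hadd (h ((I c).1 l)) ((I c).2 l)] \in psi.

Lemma inQP c (u : V) : inQ c u -> exists2 s, val u = Cr c s & s \in psi.
Proof.
case: u => [[[[[[y r]|[[y i] b]]|[[[y i] b] j]]|[[[y i] r] f]]|[c' s']] Hv] //=.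
rewrite /inQ /= => /eqP [->]; by exists s'.
Qed.

Lemma cardQ c : #|[set u : V | inQ c u]| = #|psi|.
Proof.
have E : [set sndC (val u) | u in [set u : V | inQ c u]] = psi.
  apply/setP=> s; apply/imsetP/idP.
  - case=> u; rewrite inE => /inQP [s' -> Hs'] ->; exact: Hs'.
  - move=> Hs; exists (mkC c Hs) => //; by rewrite inE /inQ /= eqxx.
rewrite -[in RHS]E; symmetry.
apply: card_in_imset => u v; rewrite !inE => /inQP [s1 Hu _] /inQP [s2 Hv _].
rewrite Hu Hv /= => Hs; apply: val_inj; by rewrite Hu Hv Hs.
Qed.


Lemma nice_sat (I : instance p k n m) pi c :
  valid_instance I -> Kzero p k \in psi -> balanced psi -> pairwise_independent psi ->
  nice I pi c -> satv (hx pi) I c.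
Proof.
move=> VI Hk0 Hbal Hpw /andP[/forallP N1 /forallP N2].
have N1' : forall u v, inQ c u -> adjG I u v -> adjG (zero_instance I) (pi u) (pi v).
  by move=> u v Hu Huv; have /forallP/(_ v) := N1 u; rewrite Hu Huv.
have N2' : forall u, inQ c u -> isC (val (pi u)).
  by move=> u Hu; have := N2 u; rewrite Hu.
have injI : forall c0, injective (I c0).1.
  by move=> c0; apply/injectiveP; move/forallP: VI; apply.
set I0 := zero_instance I.
have I0E : forall c0, (I0 c0).1 = (I c0).1 /\ (I0 c0).2 = Kzero p k.
  by move=> c0; rewrite /I0 /zero_instance ffunE.
set u0 := mkC c Hk0.
have Hu0 : inQ c u0 by rewrite /inQ /= eqxx.
have : isC (val (pi u0)) := N2' _ Hu0.
case E0: (val (pi u0)) => [//|[c' s0']] _.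
have QQ : forall u, inQ c u -> inQ c' (pi u).
  move=> u Hu; case: (eqVneq u u0) => [->|Hne]; first by rewrite /inQ E0.
  have [s Hus Hs] := inQP Hu.
  have Hadj : adjG I u u0.
    apply: (@adjCC I u u0 c s (Kzero p k)) => //.
    apply: contra_neq Hne => Es; apply: val_inj; by rewrite Hus Es.
  have := N1' _ _ Hu Hadj; rewrite adj_sym => /(adjC_inv E0) [[s'' Hs'']|[l Hl]].
    by rewrite /inQ Hs'' /= eqxx.
  by have := N2' _ Hu; rewrite Hl.
have QQ' : [set pi u | u in [set u | inQ c u]] = [set v | inQ c' v].
  apply/eqP; rewrite eqEcard card_imset; last exact: perm_inj.
  rewrite !cardQ leqnn andbT.
  apply/subsetP => v /imsetP [u]; rewrite inE => Hu ->; rewrite inE; exact: QQ.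
have preQ : forall v, inQ c' v -> exists2 u, inQ c u & v = pi u.
  move=> v Hv; have : v \in [set pi u | u in [set u | inQ c u]] by rewrite QQ' inE.
  case/imsetP => u; rewrite inE => Hu ->; by exists u.
have F : forall u s s' l, val u = Cr c s -> val (pi u) = Cr c' s' ->
   exists j, val (pi (Xv ((I c).1 l) (Hsub (s l) ((I c).2 l)))) == Xr ((I c').1 j) (s' j).
  move=> u s s' l Hu Hpu.
  have Hq : inQ c u by rewrite /inQ Hu.
  have := N1' _ (Xv ((I c).1 l) (Hsub (s l) ((I c).2 l))) Hq
    (@adjCX I u (Xv ((I c).1 l) (Hsub (s l) ((I c).2 l))) c s l Hu erefl).
  case/(adjC_inv Hpu) => [[s'' Hw]|[j Hw]].
    have : inQ c' (pi (Xv ((I c).1 l) (Hsub (s l) ((I c).2 l)))) by rewrite /inQ Hw.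
    case/preQ => u' Hu' Eu'.
    move/perm_inj: Eu' => Eu'. by move: Hu'; rewrite -Eu'.
  exists j; rewrite Hw; case: (I0E c') => -> ->; by rewrite ffunE Hsub0.
have ex_s : forall l b, exists s u s', [/\ s \in psi, val u = Cr c s,
     val (pi u) = Cr c' s' & Hsub (s l) ((I c).2 l) = b].
  move=> l b.
  have : (0 < #|[set s in psi | s l == Hadd b ((I c).2 l)]|)%N.
    have := Hbal l (Hadd b ((I c).2 l)) => E; rewrite lt0n; apply/negP=> /eqP C0.
    move: E; rewrite C0 mul0n => /esym/eqP; rewrite cards_eq0 => /eqP Ep.
    by move: (Hk0); rewrite Ep inE.
  case/card_gt0P => s; rewrite inE => /andP[Hs /eqP Hsl].
  have Hq : inQ c (mkC c Hs) by rewrite /inQ /= eqxx.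
  have := QQ _ Hq; rewrite /inQ; case E: (val (pi (mkC c Hs))) => [//|[c'' s']] /eqP [Ec].
  exists s, (mkC c Hs), s'; split => //; first by rewrite E Ec.
  by rewrite Hsl HsubK.
have img : forall s (Hs : s \in psi), exists t0, val (pi (mkC c Hs)) = Cr c' t0.
  move=> s Hs; have Hq : inQ c (mkC c Hs) by rewrite /inQ /= eqxx.
  have := QQ _ Hq; rewrite /inQ; case E: (val (pi (mkC c Hs))) => [//|[c'' s']] /eqP [Ec].
  by exists s'; rewrite Ec.
have XvI : forall x1 x2 b1 b2, val (pi (Xv x1 b1)) = val (pi (Xv x2 b2)) -> x1 = x2 /\ b1 = b2.
  by move=> x1 x2 b1 b2 /val_inj/perm_inj/(congr1 val) [-> ->].
have Const : forall l b b', varX (val (pi (Xv ((I c).1 l) b))) =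
                            varX (val (pi (Xv ((I c).1 l) b'))).
  move=> l b b'.
  have [s1 [u1 [t1 [Hs1 Hu1 Hpu1 Hb1]]]] := ex_s l b.
  have [j /eqP Gb] := F _ _ _ l Hu1 Hpu1; rewrite Hb1 in Gb.
  have [s [u [tt [Hs Hu Hpu Hb]]]] := ex_s l b'.
  pose jf mm := xchoose (F _ _ _ mm Hu Hpu).
  have Hjf : forall mm, val (pi (Xv ((I c).1 mm) (Hsub (s mm) ((I c).2 mm)))) =
                        Xr ((I c').1 (jf mm)) (tt (jf mm)).
    by move=> mm; apply/eqP; exact: (xchooseP (F _ _ _ mm Hu Hpu)).
  have injjf : injective jf.
    move=> a1 a2 E; have := Hjf a1; rewrite E -(Hjf a2) => /XvI [/injI -> _] //.
  case/codomP: (injF_onto injjf j) => mm Emm.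
  case: (eqVneq mm l) => [Eml|Nml].
    rewrite Gb -Hb; subst mm; by rewrite Hjf /= Emm.
  have := Hpw l mm (Hadd b ((I c).2 l)) (s mm); rewrite eq_sym Nml => /(_ isT) E.
  have : (0 < #|[set s0 in psi | (s0 l == Hadd b ((I c).2 l)) && (s0 mm == s mm)]|)%N.
    rewrite lt0n; apply/negP=> /eqP C0.
    move: E; rewrite C0 mul0n => /esym/eqP; rewrite cards_eq0 => /eqP Ep.
    by move: (Hk0); rewrite Ep inE.
  case/card_gt0P => s2; rewrite inE => /andP[Hs2 /andP[/eqP Hs2l /eqP Hs2m]].
  have [t2 Ht2] := img _ Hs2.
  have [j1 /eqP G1] := F _ _ _ l (erefl : val (mkC c Hs2) = Cr c s2) Ht2.
  have [j2 /eqP G2] := F _ _ _ mm (erefl : val (mkC c Hs2) = Cr c s2) Ht2.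
  rewrite Hs2l HsubK Gb in G1. rewrite Hs2m Hjf -Emm in G2.
  case: G1 => /injI Ej1 _; case: G2 => /injI Ej2 _.
  have : val (pi (Xv ((I c).1 l) b)) =
         val (pi (Xv ((I c).1 mm) (Hsub (s mm) ((I c).2 mm)))).
    have [j1' /eqP G1'] := F _ _ _ l (erefl : val (mkC c Hs2) = Cr c s2) Ht2.
    have [j2' /eqP G2'] := F _ _ _ mm (erefl : val (mkC c Hs2) = Cr c s2) Ht2.
    rewrite Hs2l HsubK in G1'; rewrite Hs2m in G2'.
    rewrite G1' G2'.
    have E1 : j1' = j.
      move: G1'; rewrite Gb => -[/injI]; done.
    have E2 : j2' = j.
      move: G2'; rewrite Hjf -Emm => -[/injI]; done.
    by rewrite E1 E2.
  case/XvI => /injI Elm _; by rewrite Elm eqxx in Nml.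
have Hc0 : inQ c' (mkC c' Hk0) by rewrite /inQ /= eqxx.
have [us Hus Eus] := preQ _ Hc0.
have [s0 Hus0 Hs0] := inQP Hus.
have Hpus : val (pi us) = Cr c' (Kzero p k) by rewrite -Eus.
rewrite /satv.
suff -> : [ffun l => Hadd (hx pi ((I c).1 l)) ((I c).2 l)] = s0 by [].
apply/ffunP => l; rewrite ffunE.
suff -> : hx pi ((I c).1 l) = Hsub (s0 l) ((I c).2 l) by rewrite HaddK.
have [j /eqP Gj] := F _ _ _ l Hus0 Hpus; rewrite ffunE in Gj.
have Pk : pickp pi ((I c).1 l) (Hsub (s0 l) ((I c).2 l)).
  apply/pickpP; exists ((I c').1 j); split => //.
  by rewrite -(Const l (Hsub (s0 l) ((I c).2 l)) (Hzero p)) Gj.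
rewrite /hx; case: pickP => [b /pickpP [y [Gb Hy]] | N]; last by have := N (Hsub (s0 l) ((I c).2 l)); rewrite Pk.
move: Hy; rewrite -(Const l (Hsub (s0 l) ((I c).2 l)) (Hzero p)) Gj /= => -[Ey].
have : val (pi (Xv ((I c).1 l) b)) = val (pi (Xv ((I c).1 l) (Hsub (s0 l) ((I c).2 l)))).
  by rewrite Gb Gj Ey.
by case/XvI => _ ->.
Qed.

End Struct.
Section Count.
Variables (t : nat) (p : 'I_t -> nat) (k n m : nat) (psi : {set Ktup p k}).
Local Notation H := (Hgrp p).
Local Notation V := (Vert n m psi).
Local Notation VR := (Vraw p k n m).

Lemma set2_eq (T : finType) (a b c d : T) : [set a; b] = [set c; d] ->
  (a = c /\ b = d) \/ (a = d /\ b = c).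
Proof.
move=> E.
have Hc : c \in [set a; b] by rewrite E set21.
have Hd : d \in [set a; b] by rewrite E set22.
have Ha : a \in [set c; d] by rewrite -E set21.
have Hb : b \in [set c; d] by rewrite -E set22.
move/set2P: Hc => Hc; move/set2P: Hd => Hd; move/set2P: Ha => Ha; move/set2P: Hb => Hb.
intuition subst; auto.
Qed.

Definition lostE (I : instance p k n m) (pi : {perm V}) :=
  [set E in edges (@adjG _ _ _ _ _ psi I) |
     [set pi x | x in E] \notin edges (@adjG _ _ _ _ _ psi (zero_instance I))].

Lemma lost_card (I : instance p k n m) (pi : {perm V}) : #|edges (@adjG _ _ _ _ _ psi I)| =
   preserved (adjG I) (adjG (zero_instance I)) pi + #|lostE I pi|.
Proof.
rewrite /preserved /lostE !setIdE -(cardsID [set E : {set V} | [set pi x | x in E] \in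
   edges (@adjG _ _ _ _ _ psi (zero_instance I))] (edges (adjG I))).
congr (_ + _); apply: eq_card => E; by rewrite !inE andbC.
Qed.

Lemma lost_adj (I : instance p k n m) (pi : {perm V}) (u v : V) : adjG I u v -> ~~ adjG (zero_instance I) (pi u) (pi v) ->
  [set u; v] \in lostE I pi.
Proof.
move=> Huv Hn; rewrite inE; apply/andP; split.
  by apply/imsetP; exists (u, v) => //; rewrite inE.
rewrite imsetU1 imset_set1; apply/negP => /imsetP [[a b]]; rewrite inE /= => Hab E.
case: (set2_eq E) => [[Ea Eb]|[Ea Eb]]; subst a b; first by rewrite Hab in Hn.
by rewrite adj_sym Hab in Hn.
Qed.

Definition badU (I : instance p k n m) (pi : {perm V}) :=
  [set u : V | [exists v, adjG I u v && ~~ adjG (zero_instance I) (pi u) (pi v)]].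

Lemma badU_card (I : instance p k n m) (pi : {perm V}) : #|badU I pi| <= 2 * #|lostE I pi|.
Proof.
pose g (u : V) := [set u; odflt u [pick v | adjG I u v && ~~ adjG (zero_instance I) (pi u) (pi v)]].
have gL : forall u, u \in badU I pi -> g u \in lostE I pi.
  move=> u; rewrite inE => /existsP [v Hv]; rewrite /g.
  case: pickP => [w /andP[H1 H2] | N]; last by rewrite N in Hv.
  exact: lost_adj.
rewrite -sum1_card (partition_big g (mem (lostE I pi))) //=.
rewrite mulnC -sum_nat_const; apply: leq_sum => E HE.
rewrite sum1dep_card.
apply: (@leq_trans #|E|).
  apply: subset_leq_card; apply/subsetP => u; rewrite inE => /andP[_ /eqP <-].
  by rewrite /g set21.
move: HE; rewrite inE => /andP[/imsetP [[a b] _ ->] _]; by rewrite cards2; case: (_ != _).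
Qed.


Lemma nice_count (I : instance p k n m) (pi : {perm V}) :
  m <= #|[set c | nice I pi c]| + 2 * #|lostE I pi| + #|[set v : V | ~~ isC (val v)]|.
Proof.
set B1 := [set c : 'I_m | ~~ [forall u : V, [forall v : V, inQ c u ==> adjG I u v ==>
           adjG (zero_instance I) (pi u) (pi v)]]].
set B2 := [set c : 'I_m | ~~ [forall u : V, inQ c u ==> isC (val (pi u))]].
have HB : #|~: [set c | nice I pi c]| <= #|B1| + #|B2|.
  apply: (leq_trans _ (leq_card_setU B1 B2).1).
  apply: subset_leq_card; apply/subsetP => c; rewrite !inE /nice negb_and.
  by case/orP => ->; rewrite ?orbT.
have E1 : #|B1| <= #|badU I pi|.
  rewrite -(card_imset _ (@Some_inj _)).
  apply: (leq_trans _ (leq_imset_card (fun u : V => cidx (val u)) _)).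
  apply: subset_leq_card; apply/subsetP => oc /imsetP [c Hc ->].
  move: Hc; rewrite inE => /forallPn [u /forallPn [v]]; rewrite !negb_imply.
  case/andP => Hu /andP[Hadj Hn].
  apply/imsetP; exists u; last by move/eqP: Hu.
  rewrite inE; apply/existsP; exists v; by rewrite Hadj Hn.
have E2 : #|B2| <= #|[set v : V | ~~ isC (val v)]|.
  rewrite -(card_imset _ (@Some_inj _)).
  apply: (leq_trans _ (leq_imset_card (fun v : V => cidx (val ((pi^-1)%g v))) _)).
  apply: subset_leq_card; apply/subsetP => oc /imsetP [c Hc ->].
  move: Hc; rewrite inE => /forallPn [u]; rewrite !negb_imply => /andP[Hu Hn].
  apply/imsetP; exists (pi u); first by rewrite inE.
  by rewrite permK; move/eqP: Hu.
have Hm := cardsC [set c | nice I pi c]; rewrite card_ord in Hm.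
apply: (@leq_trans (#|[set c | nice I pi c]| + #|~: [set c | nice I pi c]|)).
  by rewrite Hm.
rewrite -addnA leq_add2l.
apply: (leq_trans HB); apply: leq_add => //.
exact: (leq_trans E1 (badU_card I pi)).
Qed.

End Count.
Section Edges.
Variables (t : nat) (p : 'I_t -> nat) (k n m : nat) (psi : {set Ktup p k}).
Local Notation H := (Hgrp p).
Local Notation V := (Vert n m psi).
Local Notation VR := (Vraw p k n m).

Definition LOC : finType := (H + 'I_t * H + 'I_t * H * 'I_t + 'I_t * H * bool)%type.

Definition gl (v : VR) : option ('I_n * LOC) :=
  match v with
  | inl (inl (inl (inl (x, b)))) => Some (x, inl (inl (inl b)))
  | inl (inl (inl (inr (x, i, b)))) => Some (x, inl (inl (inr (i, b))))
  | inl (inl (inr (x, i, b, j))) => Some (x, inl (inr (i, b, j)))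
  | inl (inr (x, i, r, f)) => Some (x, inr (i, r, f))
  | inr _ => None
  end.

Lemma gl_inj (a b : VR) : ~~ isC a -> gl a = gl b -> a = b.
Proof.
case: a => [[[[[x1 b1]|[[x1 i1] b1]]|[[[x1 i1] b1] j1]]|[[[x1 i1] r1] f1]]|[c1 s1]];
case: b => [[[[[x2 b2]|[[x2 i2] b2]]|[[[x2 i2] b2] j2]]|[[[x2 i2] r2] f2]]|[c2 s2]] //=;
by move=> _ []; intros; subst.
Qed.

Lemma arc_gadget (I : instance p k n m) (a b : VR) : ~~ isC a -> ~~ isC b ->
  Defs.arc I a b -> omap fst (gl a) = omap fst (gl b).
Proof.
case: a => [[[[[x1 b1]|[[x1 i1] b1]]|[[[x1 i1] b1] j1]]|[[[x1 i1] r1] [|]]]|[c1 s1]];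
case: b => [[[[[x2 b2]|[[x2 i2] b2]]|[[[x2 i2] b2] j2]]|[[[x2 i2] r2] [|]]]|[c2 s2]] //=;
by move=> _ _ /andP[/eqP-> _].
Qed.


Lemma gl_some (a : VR) : ~~ isC a -> exists y, gl a = Some y.
Proof.
case: a => [[[[[x1 b1]|[[x1 i1] b1]]|[[[x1 i1] b1] j1]]|[[[x1 i1] r1] f1]]|[c1 s1]] //=;
by move=> _; eexists.
Qed.

Lemma adj_gadget (I : instance p k n m) (u v : V) : ~~ isC (val u) -> ~~ isC (val v) ->
  adjG I u v -> omap fst (gl (val u)) = omap fst (gl (val v)).
Proof.
move=> Hu Hv; rewrite /adjG => /orP[] H1; first exact: (arc_gadget Hu Hv H1).
by symmetry; apply: (arc_gadget Hv Hu H1).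
Qed.

Definition f1 (I : instance p k n m) (x : V * V) :
  (option 'I_m * Ktup p k * (Ktup p k + option 'I_k))%type :=
  (cidx (val x.1), sndC (val x.1),
   if val x.2 is inr (_, s') then inl s'
   else inr (if cidx (val x.1) is Some c then
               [pick l | varX (val x.2) == Some ((I c).1 l)] else None)).

Definition f3 (x : V * V) : (option ('I_n * LOC) * option LOC)%type :=
  (gl (val x.1), omap snd (gl (val x.2))).

Lemma pick_idx (f : 'I_k -> 'I_n) l1 : injective f ->
  [pick l | Some (f l1) == Some (f l)] = Some l1.
Proof.
move=> injf; case: pickP => [l /eqP [/injf ->] //| N].
by have := N l1; rewrite eqxx.
Qed.

Lemma edges_bound (I : instance p k n m) : valid_instance I ->
  #|edges (@adjG _ _ _ _ _ psi I)| <=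
  2 * #|{: option 'I_m * Ktup p k * (Ktup p k + option 'I_k)}|
  + #|{: option ('I_n * LOC) * option LOC}|.
Proof.
move=> VI.
have injI : forall c0, injective (I c0).1.
  by move=> c0; apply/injectiveP; move/forallP: VI; apply.
set A := [set x : V * V | adjG I x.1 x.2].
rewrite /edges; apply: (leq_trans (leq_imset_card _ _)).
set A1 := [set x in A | isC (val x.1)].
set A2 := [set x in A | isC (val x.2)].
set A3 := [set x in A | ~~ isC (val x.1) && ~~ isC (val x.2)].
have HA : #|A| <= #|A1| + #|A2| + #|A3|.
  apply: (@leq_trans #|A1 :|: A2 :|: A3|).
    apply: subset_leq_card; apply/subsetP => x; rewrite !inE => -> /=.
    by case: (isC _); case: (isC _).
  apply: (leq_trans (leq_card_setU _ _).1); rewrite leq_add2r.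
  exact: (leq_card_setU _ _).1.
have inj1 : {in A1 &, injective (f1 I)}.
  move=> [u v] [u' v']; rewrite !inE /= => /andP[Huv Cu] /andP[Huv' Cu'].
  case Eu: (val u) Cu => [//|[c s]] _; case Eu': (val u') Cu' => [//|[c' s']] _.
  rewrite /f1 /= Eu Eu' /= => -[Ec Es Ev]; subst c' s'.
  have Euu : u = u' by apply: val_inj; rewrite Eu Eu'.
  subst u'; congr (_, _).
  case: (adjC_inv Eu Huv) => [[s1 Hv]|[l1 Hv]];
    case: (adjC_inv Eu Huv') => [[s2 Hv']|[l2 Hv']]; move: Ev; rewrite Hv Hv' //=.
    by case=> Es; apply: val_inj; rewrite Hv Hv' Es.
  rewrite !pick_idx // => -[El]; apply: val_inj; by rewrite Hv Hv' El.
have H1 : #|A1| <= #|{: option 'I_m * Ktup p k * (Ktup p k + option 'I_k)}|.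
  rewrite -(card_in_imset inj1); exact: max_card.
have H2 : #|A2| <= #|A1|.
  have injs : injective (fun x : V * V => (x.2, x.1)) by move=> [a b] [c d] [-> ->].
  rewrite -(card_imset A2 injs); apply: subset_leq_card; apply/subsetP => x.
  case/imsetP => y; rewrite !inE => /andP[Hy Cy] -> /=; by rewrite Cy adj_sym Hy.
have inj3 : {in A3 &, injective f3}.
  move=> [u v] [u' v']; rewrite !inE /= => /andP[Huv /andP[Cu Cv]] /andP[Huv' /andP[Cu' Cv']].
  rewrite /f3 /= => -[Eg Eg2].
  have Eu : u = u' by apply/val_inj/gl_inj.
  subst u'; congr (_, _); apply/val_inj/gl_inj => //.
  have G1 := adj_gadget Cu Cv Huv; have G2 := adj_gadget Cu Cv' Huv'.
  case: (gl_some Cv) => [[xv lv] Ev]; case: (gl_some Cv') => [[xv' lv'] Ev'].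
  by move: G1 G2 Eg2; rewrite Ev Ev' /= => -> [->] [->].
have H3 : #|A3| <= #|{: option ('I_n * LOC) * option LOC}|.
  rewrite -(card_in_imset inj3); exact: max_card.
apply: (leq_trans HA); rewrite mul2n -addnn; apply: leq_add => //.
apply: leq_add => //; exact: leq_trans H2 H1.
Qed.

End Edges.
Lemma leq_expr a b e : a <= b -> a ^ e <= b ^ e.
Proof. by move=> Hab; elim: e => // e IH; rewrite !expnS leq_mul. Qed.

Section Prob.
Variables (t : nat) (p : 'I_t -> nat) (k n m : nat) (psi : {set Ktup p k}).
Local Notation H := (Hgrp p).

Definition Kshift (b a : Ktup p k) : Ktup p k := [ffun l => Hadd (b l) (a l)].

Lemma Kshift_inj b : injective (Kshift b).
Proof.
move=> a1 a2 E; apply/ffunP => l; apply/ffunP => i.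
have := congr1 (fun f : Ktup p k => f l i) E; rewrite /Kshift !ffunE.
by move/addrI.
Qed.

Lemma shift_sum (b : Ktup p k) (w : nat) :
  \sum_(a : Ktup p k) w ^ (Kshift b a \in psi) = (#|{: Ktup p k}| - #|psi|) + w * #|psi|.
Proof.
rewrite (bigID (fun a => Kshift b a \in psi)) /= addnC.
have -> : \sum_(a | Kshift b a \in psi) w ^ (Kshift b a \in psi) = \sum_(a | Kshift b a \in psi) w.
  by apply: eq_bigr => a ->.
have -> : \sum_(a | Kshift b a \notin psi) w ^ (Kshift b a \in psi) = \sum_(a | Kshift b a \notin psi) 1.
  by apply: eq_bigr => a /negbTE ->.
rewrite !sum_nat_const muln1 mulnC.
have E1 : #|[pred a | Kshift b a \in psi]| = #|psi|.
  have := card_preimset psi (@Kshift_inj b); rewrite /preimset => <-.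
  by apply: eq_card => a; rewrite !inE.
have E2 : #|[pred a | Kshift b a \notin psi]| = #|{: Ktup p k}| - #|psi|.
  have := cardC [pred a | Kshift b a \in psi]; rewrite E1 => <-; rewrite addKn.
  by apply: eq_card => a; rewrite !inE.
congr (_ + _); last congr (w * _).
  by rewrite -E2; apply: eq_card => a; rewrite !inE.
by rewrite -E1; apply: eq_card => a; rewrite !inE.
Qed.


Definition Jn := #|[set f : {ffun 'I_k -> 'I_n} | injectiveb f]|.
Definition satx (h : 'I_n -> H) (x : constr p k n) : bool :=
  Kshift [ffun l => h (x.1 l)] x.2 \in psi.

Lemma satvE (h : 'I_n -> H) (I : instance p k n m) c : satv psi h I c = satx h (I c).
Proof.
rewrite /satv /satx /Kshift.
have -> : [ffun l => Hadd ([ffun l0 => h ((I c).1 l0)] l) ((I c).2 l)] =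
          [ffun l => Hadd (h ((I c).1 l)) ((I c).2 l)].
  by apply/ffunP => l; rewrite !ffunE.
by [].
Qed.

Lemma weight_sum (h : 'I_n -> H) (w : nat) :
  \sum_(I : instance p k n m | valid_instance I) w ^ #|[set c | satv psi h I c]|
  = (Jn * ((#|{: Ktup p k}| - #|psi|) + w * #|psi|)) ^ m.
Proof.
pose F (x : constr p k n) := (injectiveb x.1 : nat) * w ^ satx h x.
rewrite big_mkcond /=.
transitivity (\sum_(I : instance p k n m) \prod_(c : 'I_m) F (I c)).
  apply: eq_bigr => I _.
  rewrite big_split /= -expn_sum.
  have -> : \sum_(c < m) satx h (I c) = #|[set c | satv psi h I c]|.
    rewrite -sum1_card [RHS]big_mkcond /=; apply: eq_bigr => c _.
    by rewrite inE satvE; case: (satx h (I c)).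
  rewrite /valid_instance; case: (boolP [forall c, injectiveb (I c).1]) => [/forallP Hall | /forallPn [c0 Hc0]].
    by rewrite big1 ?mul1n // => c _; rewrite Hall.
  by rewrite (bigD1 c0) //= (negbTE Hc0) !mul0n.
rewrite -(bigA_distr_bigA (fun (c : 'I_m) (x : constr p k n) => F x)) /=.
rewrite prod_nat_const card_ord; congr (_ ^ _).
rewrite -(pair_bigA _ (fun (f : {ffun 'I_k -> 'I_n}) (a : Ktup p k) => F (f, a))) /=.
rewrite /Jn -sum1_card big_distrl /= [RHS]big_mkcond /=.
apply: eq_bigr => f _; rewrite inE /F /=.
rewrite -big_distrr /=.
have -> : \sum_(a : Ktup p k) w ^ satx h (f, a) = (#|{: Ktup p k}| - #|psi|) + w * #|psi|.
  rewrite /satx /=; exact: shift_sum.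
by case: (injectiveb f); rewrite ?mul1n ?mul0n.
Qed.


Definition nsat (h : 'I_n -> H) (I : instance p k n m) := #|[set c | satv psi h I c]|.

Lemma count_h (h : 'I_n -> H) :
  #|[set I : instance p k n m | valid_instance I && (3 * m <= 4 * nsat h I)]| * 2 ^ (m - m %/ 4)
  <= (Jn * ((#|{: Ktup p k}| - #|psi|) + 2 * #|psi|)) ^ m.
Proof.
rewrite -(weight_sum h 2) -sum_nat_const.
apply: (@leq_trans (\sum_(I in [set I : instance p k n m | valid_instance I &&
          (3 * m <= 4 * nsat h I)]) 2 ^ nsat h I)).
  apply: leq_sum => I; rewrite inE => /andP[_ H3]; rewrite leq_pexp2l //; lia.
rewrite big_mkcond [X in _ <= X]big_mkcond /=; apply: leq_sum => I _.
rewrite inE /nsat; case: (valid_instance I) => //=; by case: ifP.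
Qed.

Lemma valid_count :
  #|[set I : instance p k n m | valid_instance I]| = (Jn * #|{: Ktup p k}|) ^ m.
Proof.
have := weight_sum (fun _ => Hzero p) 1.
rewrite mul1n subnK ?max_card // => <-.
rewrite -sum1_card [RHS]big_mkcond [LHS]big_mkcond /=; apply: eq_bigr => I _.
by rewrite inE exp1n.
Qed.

Lemma bad_count : 2 * #|psi| <= #|{: Ktup p k}| ->
  #|[set I : instance p k n m | valid_instance I &&
        [exists h : {ffun 'I_n -> H}, 3 * m <= 4 * nsat h I]]| * 2 ^ (m - m %/ 4) * 2 ^ m
  <= #|{: {ffun 'I_n -> H}}| * 3 ^ m * #|[set I : instance p k n m | valid_instance I]|.
Proof.
move=> H2.
set S := fun h : {ffun 'I_n -> H} =>
  [set I : instance p k n m | valid_instance I && (3 * m <= 4 * nsat h I)].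
have HU : #|[set I : instance p k n m | valid_instance I &&
        [exists h : {ffun 'I_n -> H}, 3 * m <= 4 * nsat h I]]| <= \sum_h #|S h|.
  rewrite -sum1_card.
  apply: (@leq_trans (\sum_(I in [set I : instance p k n m | valid_instance I &&
        [exists h : {ffun 'I_n -> H}, 3 * m <= 4 * nsat h I]]) \sum_h (I \in S h : nat))).
    apply: leq_sum => I; rewrite inE => /andP[VI /existsP [h Hh]].
    rewrite (bigD1 h) //= inE VI Hh /=; exact: leq_addr.
  rewrite exchange_big /=; apply: leq_sum => h _.
  rewrite -sum1_card [X in _ <= X]big_mkcond /= big_mkcond /=.
  apply: (@leq_trans (\sum_I (I \in S h : nat))).
    by apply: leq_sum => I _; case: (_ \in _); case: (_ \in S h).
  by apply: leq_sum => I _; case: (_ \in S h).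
have KP : #|psi| <= #|{: Ktup p k}| by exact: max_card.
apply: (@leq_trans ((\sum_h #|S h|) * 2 ^ (m - m %/ 4) * 2 ^ m)).
  by rewrite !leq_mul2r HU !orbT.
rewrite !big_distrl /=.
apply: (@leq_trans (\sum_(h : {ffun 'I_n -> H})
    (3 ^ m * #|[set I : instance p k n m | valid_instance I]|))); last first.
  by rewrite sum_nat_const mulnA.
apply: leq_sum => h _.
rewrite valid_count -expnMn.
apply: (leq_trans (leq_mul (count_h h) (leqnn (2 ^ m)))).
rewrite -expnMn; apply: leq_expr.
rewrite -mulnA (mulnCA 3) leq_mul2l; apply/orP; right.
lia.
Qed.


Lemma psi_half : is_subgroup psi -> psi != setT -> 2 * #|psi| <= #|{: Ktup p k}|.
Proof.
case=> H0 Hadd Hopp Hne.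
have [b _ Hb] : exists2 b, b \in [set: Ktup p k] & b \notin psi.
  by apply/subsetPn; move: Hne; rewrite eqEsubset subsetT.
set B := [set Kadd b s | s in psi].
have cB : #|B| = #|psi|.
  by apply: card_imset => s1 s2; apply: (@Kshift_inj b).
have dis : [disjoint psi & B].
  apply/pred0P => x /=; apply/negP => /andP[Hx /imsetP [s Hs Ex]].
  have : Kadd x (Kopp s) = b.
    by rewrite Ex; apply/ffunP => l; apply/ffunP => i; rewrite !ffunE addrK.
  by move=> Eb; move: Hb; rewrite -Eb (Hadd _ _ Hx (Hopp _ Hs)).
have := (leq_card_setU psi B).2; rewrite dis => /eqP E.
by rewrite mul2n -addnn -{2}cB -E max_card.
Qed.

End Prob.
Section Det.
Local Open Scope ring_scope.
Variables (R : realType) (t : nat) (p : 'I_t -> nat) (k n m : nat) (psi : {set Ktup p k}).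
Local Notation H := (Hgrp p).
Local Notation V := (Vert n m psi).

Definition EB := (2 * #|{: option 'I_m * Ktup p k * (Ktup p k + option 'I_k)}|
  + #|{: option ('I_n * LOC p) * option (LOC p)}|)%N.
Definition NB := #|{: option ('I_n * LOC p)}|.

Lemma det_bound (I : instance p k n m) (delta : R) :
  valid_instance I -> Kzero p k \in psi -> balanced psi -> pairwise_independent psi ->
  0 < delta -> delta < 1 -> ~~ (GI_instance R psi I < 1 - delta) ->
  exists h : {ffun 'I_n -> H},
    m%:R <= (nsat psi h I)%:R + 2%:R * delta * EB%:R + NB%:R.
Proof.
move=> VI Hk0 Hbal Hpw Hd0 Hd1 HGI.
have VI0 : valid_instance (zero_instance I).
  by apply/forallP => c; rewrite /zero_instance ffunE /=; move/forallP: VI; apply.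
set E := #|edges (@adjG _ _ _ _ _ psi I)|.
set E0 := #|edges (@adjG _ _ _ _ _ psi (zero_instance I))|.
have HE : (E <= EB)%N by exact: edges_bound.
have HE0 : (E0 <= EB)%N by exact: edges_bound.
move: HGI; rewrite /GI_instance /GI -/E -/E0.
case: (eqVneq (maxn E E0) 0%N) => HM.
  by rewrite HM invr0 mulr0 subr_gt0 Hd1.
have Hperm : (0 < #|{: {perm V}}|)%N by apply/card_gt0P; exists 1%g.
case: (@bigop.eq_bigmax _ (preserved (@adjG _ _ _ _ _ psi I) (adjG (zero_instance I))) Hperm) => pi ->.
set pr := preserved _ _ pi.
rewrite -leNgt ler_pdivlMr ?ltr0n ?lt0n // => Hpr.
have HL := lost_card I pi; rewrite -/E -/pr in HL.
have HLr : (#|lostE I pi|)%:R <= delta * EB%:R.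
  have : (#|lostE I pi|)%:R <= delta * (maxn E E0)%:R :> R.
    have HEM : (pr + #|lostE I pi| <= maxn E E0)%N by rewrite -HL leq_maxl.
    have H2 : (pr + #|lostE I pi|)%:R <= (maxn E E0)%:R :> R.
      rewrite ler_nat; exact: HEM.
    rewrite natrD in H2; rewrite mulrBl mul1r in Hpr; lra.
  move=> H1; apply: (le_trans H1); rewrite ler_pM2l // ler_nat geq_max HE HE0.
  done.
pose h := [ffun x => hx pi x].
exists h.
have Hn := nice_count I pi.
have Hnice : (#|[set c | nice I pi c]| <= nsat psi h I)%N.
  apply: subset_leq_card; apply/subsetP => c; rewrite !inE => Hc.
  have := nice_sat VI Hk0 Hbal Hpw Hc.
  rewrite /satv.
  have -> : [ffun l => Hadd (h ((I c).1 l)) ((I c).2 l)] =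
            [ffun l => Hadd (hx pi ((I c).1 l)) ((I c).2 l)].
    by apply/ffunP => l; rewrite !ffunE.
  by [].
have HNG : (#|[set v : V | ~~ isC (val v)]| <= NB)%N.
  rewrite /NB -(card_in_imset (f := fun v : V => gl (val v))); first exact: max_card.
  by move=> u v; rewrite !inE => Cu _ E1; apply/val_inj/gl_inj.
have : (m <= nsat psi h I + 2 * #|lostE I pi| + NB)%N.
  apply: (leq_trans Hn); rewrite leq_add // leq_add2r //.
move=> Hm0.
have Hm : (m%:R <= (nsat psi h I + 2 * #|lostE I pi| + NB)%:R :> R) by rewrite ler_nat.
rewrite !natrD addr0 in Hm; lra.
Qed.

End Det.
Lemma nine j : (4 ^ j * j.+1 <= 9 ^ j)%N.
Proof.
elim: j => // j IH; rewrite !expnS.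
apply: (@leq_trans (9 * (4 ^ j * j.+1))); last by rewrite leq_mul2l IH orbT.
set x := 4 ^ j; nia.
Qed.

Lemma base_ok hc j : (2 * hc <= j)%N -> (2 * hc * 81 ^ (2 * j) <= 128 ^ (2 * j))%N.
Proof.
move=> Hj.
have H1 : (81 ^ (2 * j) * 3 ^ (2 * j) <= 128 ^ (2 * j) * 2 ^ (2 * j))%N.
  by rewrite -!expnMn; apply: leq_expr.
have H2 : (2 ^ (2 * j) * j.+1 <= 3 ^ (2 * j))%N.
  by rewrite !expnM; exact: nine.
have H3 : (81 ^ (2 * j) * (2 ^ (2 * j) * j.+1) <= 128 ^ (2 * j) * 2 ^ (2 * j))%N.
  apply: leq_trans H1; by rewrite leq_mul2l H2 orbT.
have H4 : (j.+1 * 81 ^ (2 * j) <= 128 ^ (2 * j))%N.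
  rewrite -(@leq_pmul2r (2 ^ (2 * j))) ?expn_gt0 //.
  apply: leq_trans H3; rewrite mulnCA mulnC leq_mul2l; apply/orP; right.
  by rewrite mulnC.
apply: leq_trans H4; rewrite leq_mul2r; apply/orP; right; lia.
Qed.

Lemma final_nat (A V0 hc C n : nat) :
  (2 * hc ^ 4 * 81 ^ C <= 128 ^ C)%N ->
  (A * 2 ^ (C * n - C * n %/ 4) * 2 ^ (C * n) <= hc ^ n * 3 ^ (C * n) * V0)%N ->
  (A ^ 4 * 2 ^ n <= V0 ^ 4)%N.
Proof.
move=> Hb HA.
set m := (C * n)%N in HA *.
set T := (m - m %/ 4)%N in HA.
have H1 := leq_expr 4 HA.
rewrite !expnMn -!expnM in H1.
have H7 : (2 ^ (7 * m) <= 2 ^ (T * 4) * 2 ^ (m * 4))%N.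
  rewrite -expnD leq_pexp2l //; rewrite /T; lia.
have H8 : (A ^ 4 * 128 ^ m <= hc ^ (n * 4) * 81 ^ m * V0 ^ 4)%N.
  have E128 : (128 ^ m = 2 ^ (7 * m))%N by rewrite expnM.
  have E81 : (81 ^ m = 3 ^ (m * 4))%N by rewrite mulnC expnM.
  rewrite E128 E81; apply: leq_trans H1.
  rewrite -mulnA; exact: leq_mul (leqnn _) H7.
have H9 : (2 ^ n * hc ^ (n * 4) * 81 ^ m <= 128 ^ m)%N.
  have E : ((2 * hc ^ 4 * 81 ^ C) ^ n = 2 ^ n * hc ^ (n * 4) * 81 ^ m)%N.
    by rewrite expnMn expnMn -expnM -expnM /m (mulnC n 4).
  rewrite -E; exact: leq_trans (leq_expr n Hb) (eq_leq (esym (expnM _ _ _))).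
rewrite -(@leq_pmul2r (128 ^ m)) ?expn_gt0 //.
apply: (@leq_trans (2 ^ n * (hc ^ (n * 4) * 81 ^ m * V0 ^ 4))).
  rewrite mulnAC mulnC; exact: leq_mul (leqnn _) H8.
apply: (@leq_trans ((2 ^ n * hc ^ (n * 4) * 81 ^ m) * V0 ^ 4)).
  by apply: eq_leq; ring.
by rewrite mulnC leq_mul2l H9 orbT.
Qed.
Local Open Scope ring_scope.

Theorem lemma7p4 (R : realType) (t : nat) (p : 'I_t -> nat) (k : nat)
    (psi : {set Ktup p k}) :
  (forall i, (1 < p i)%N) ->
  (3 <= k)%N ->
  is_subgroup psi ->
  balanced psi ->
  pairwise_independent psi ->
  psi != setT ->
  exists delta c : R, 0 < delta /\ 0 < c /\
    forall eps : R, 0 < eps -> exists N : nat, forall n : nat, (N <= n)%N ->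
      1 - eps <=
        Pr_instance R (n := n) (m := Num.truncn (c * n%:R))
          (fun I => GI_instance R psi I < 1 - delta).
Proof.
move=> Hp Hk Hsg Hbal Hpw Hne.
have Hk0 : Kzero p k \in psi by case: Hsg.
have Hhalf := psi_half Hsg Hne.
pose Kc := #|{: Ktup p k}|. pose LL := #|{: LOC p}|. pose hc := #|{: Hgrp p}|.
pose j := (2 * hc ^ 4 + 8 * LL.+1)%N. pose C := (2 * j)%N.
pose Bc := (4 * C * Kc * (Kc + k.+1) + LL.+1 ^ 2)%N.
have Bc0 : (0 < Bc)%N by rewrite addn_gt0 expn_gt0 orbT.
have Kc0 : (0 < Kc)%N by apply/card_gt0P; exists (Kzero p k).
have C0 : (0 < C)%N by rewrite /C /j muln_gt0 addn_gt0 muln_gt0 orbT.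
have HC8 : (8 * LL.+1 <= C)%N by rewrite /C /j; lia.
have CBc : (C <= Bc)%N.
  rewrite /Bc; apply: leq_trans (leq_addr _ _).
  have : (1 <= Kc * (Kc + k.+1))%N by rewrite muln_gt0 Kc0 addn_gt0 Kc0.
  move: (Kc * (Kc + k.+1))%N => X HX.
  rewrite -!mulnA; nia.
have Hbase : (2 * hc ^ 4 * 81 ^ C <= 128 ^ C)%N.
  by apply: base_ok; rewrite /j leq_addr.
pose delta : R := C%:R / (16 * Bc)%:R.
have Bcr : 0 < (16 * Bc)%:R :> R by rewrite ltr0n muln_gt0.
have Hd0 : 0 < delta by rewrite divr_gt0 // ltr0n.
have Hd1 : delta < 1.
  rewrite ltr_pdivrMr // mul1r ltr_nat; lia.
have HdB : delta * Bc%:R = C%:R / 16%:R.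
  rewrite /delta natrM; field; by rewrite pnatr_eq0 -lt0n.
exists delta, C%:R; split => //; split; first by rewrite ltr0n.
move=> eps Heps.
exists (maxn k (Num.truncn ((eps ^+ 4)^-1)).+1) => n; rewrite geq_max => /andP[Hkn HNn].
have Em : Num.truncn (C%:R * n%:R : R) = (C * n)%N by rewrite -natrM natrK.
rewrite Em /Pr_instance.
have Hn1 : (0 < n)%N by lia.
have key : forall I : instance p k n (C * n), valid_instance I ->
    ~~ (GI_instance R psi I < 1 - delta) ->
    exists h : {ffun 'I_n -> Hgrp p}, (3 * (C * n) <= 4 * nsat psi h I)%N.
  move=> I VI HG.
  have [h Hh] := det_bound VI Hk0 Hbal Hpw Hd0 Hd1 HG.
  exists h.
  have HEB : (EB p k n (C * n) <= n * Bc)%N.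
    rewrite /EB.
    have -> : #|{: option 'I_(C * n) * Ktup p k * (Ktup p k + option 'I_k)}| =
              ((C * n).+1 * Kc * (Kc + k.+1))%N.
      by rewrite !card_prod card_sum !card_option !card_ord.
    have -> : #|{: option ('I_n * LOC p) * option (LOC p)}| = ((n * LL).+1 * LL.+1)%N.
      by rewrite card_prod !card_option card_prod card_ord.
    rewrite /Bc -!mulnA.
    move: (Kc * (Kc + k.+1))%N => X.
    nia.
  have HNB : (NB p n <= n * LL.+1)%N.
    rewrite /NB card_option card_prod card_ord -/LL; nia.
  have f1 : (EB p k n (C * n))%:R <= n%:R * Bc%:R :> R by rewrite -natrM ler_nat.
  have f2 : (NB p n)%:R <= n%:R * LL.+1%:R :> R by rewrite -natrM ler_nat.
  have f3 : 8%:R * LL.+1%:R <= C%:R :> R by rewrite -natrM ler_nat.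
  have f4 : delta * (EB p k n (C * n))%:R <= C%:R * n%:R / 16%:R.
    apply: (@le_trans _ _ (delta * (n%:R * Bc%:R))); first by rewrite ler_pM2l.
    rewrite mulrCA HdB (_ : n%:R * (C%:R / 16%:R) = C%:R * n%:R / 16%:R) //; ring.
  have f6 : 8%:R * (n%:R * LL.+1%:R) <= C%:R * n%:R :> R.
    by rewrite mulrCA [X in _ <= X]mulrC ler_pM2l ?ltr0n.
  move: Hh; rewrite (natrM _ C n) -mulrA => Hh.
  suff : (3 * (C * n))%:R <= (4 * nsat psi h I)%:R :> R by rewrite ler_nat.
  rewrite (natrM _ 3 (C * n)) (natrM _ C n) (natrM _ 4).
  move: Hh f4 f2 f6.
  move: (C%:R * n%:R) (delta * (EB p k n (C * n))%:R) (n%:R * LL.+1%:R) => x d q.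
  move=> H1 H2 H3 H4; lra.
set VS := [set I : instance p k n (C * n) | valid_instance I].
set GS := [set I : instance p k n (C * n) |
   valid_instance I && (GI_instance R psi I < 1 - delta)].
set BS := [set I : instance p k n (C * n) | valid_instance I &&
   [exists h : {ffun 'I_n -> Hgrp p}, (3 * (C * n) <= 4 * nsat psi h I)%N]].
have sub : (#|VS| <= #|GS| + #|BS|)%N.
  apply: leq_trans (leq_card_setU GS BS).1; apply: subset_leq_card.
  apply/subsetP => I; rewrite !inE => VI; rewrite VI /=.
  case: (boolP (GI_instance R psi I < 1 - delta)) => //= HG.
  by have [h Hh] := key I VI HG; apply/existsP; exists h.
have HB := bad_count n (C * n) Hhalf.
rewrite card_ffun card_ord in HB.
have H4 := final_nat Hbase HB.
have VS0 : (0 < #|VS|)%N.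
  apply/card_gt0P.
  exists [ffun c => ([ffun l => widen_ord Hkn l], Kzero p k)].
  rewrite inE; apply/forallP => c; rewrite ffunE /=; apply/injectiveP => a b.
  by rewrite !ffunE => /(congr1 val) /= /val_inj.
set a : R := #|BS|%:R. set v : R := #|VS|%:R. set g : R := #|GS|%:R.
have v0 : 0 < v by rewrite ltr0n.
have Hga : v <= g + a by rewrite -natrD ler_nat.
have H4r : a ^+ 4 * 2%:R ^+ n <= v ^+ 4.
  by rewrite -!natrX -natrM ler_nat.
have Hnr : (eps ^+ 4)^-1 < n%:R.
  apply: (lt_le_trans (truncnS_gt _)); by rewrite ler_nat.
have H2n : n%:R <= 2%:R ^+ n :> R.
  by rewrite -natrX ler_nat ltnW // ltn_expl.
have e4 : 0 < eps ^+ 4 by rewrite exprn_gt0.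
have Hone : 1 <= eps ^+ 4 * 2%:R ^+ n.
  have := Hnr; rewrite -(ltr_pM2l e4) mulfV ?gt_eqF // => H1.
  apply: ltW; apply: (lt_le_trans H1); by rewrite ler_pM2l.
have Ha4 : a ^+ 4 <= eps ^+ 4 * v ^+ 4.
  have p2 : 0 < 2%:R ^+ n :> R by rewrite exprn_gt0 ?ltr0n.
  rewrite -(ler_pM2r p2).
  apply: (le_trans H4r).
  have : v ^+ 4 * 1 <= v ^+ 4 * (eps ^+ 4 * 2%:R ^+ n).
    by rewrite ler_pM2l ?exprn_gt0.
  by rewrite mulr1 mulrA [v ^+ 4 * _]mulrC.
have Hav : a <= eps * v.
  rewrite -(ler_pXn2r (n := 4)) //.
  - by rewrite exprMn.
  - by rewrite nnegrE ler0n.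
  - by rewrite nnegrE mulr_ge0 // ltW.
rewrite -/g -/v ler_pdivlMr // mulrBl mul1r.
lra.
Qed.
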